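(* Let $G$ be a group, let $K$ be an uncountable algebraically closed field, and let $A$ be an affine algebraic set over $K$. Then every algebraic cellular automaton $\tau\colon A^G\to A^G$ has the closed image property: its image $\tau(A^G)$ is a closed subset of $A^G$ with respect to the prodiscrete topology.
   Context: For a group $G$ and a set $A$, $A^G$ is the set of maps $x\colon G\to A$ (configurations), with the $G$-shift $(gx)(h)=x(g^{-1}h)$. The prodiscrete topology on $A^G$ is the product topology where each factor $A$ carries the discrete topology. For $x\in A^G$ and $\Omega\subset G$, $x|_\Omega$ denotes the restriction. A cellular automaton is a map $\tau\colon A^G\to A^G$ for which there exist a finite subset $M\subset G$ (a memory set) and a map $\mu\colon A^M\to A$ (the local defining map) with $\tau(x)(g)=\mu((g^{-1}x)|_M)$ for all $x\in A^G$, $g\in G$. An affine algebraic set over a field $K$ is the common zero set in $K^m$ of a set of polynomials in $K[t_1,\dots,t_m]$; a map between affine algebraic sets $V\subset K^m$, $W\subset K^n$ is regular if it is the restriction of a polynomial map $K^m\to K^n$. For finite $M$, $A^M$ is an affine algebraic set (a finite Cartesian power of $A$). A cellular automaton $\tau\colon A^G\to A^G$ with $A$ an affine algebraic set over $K$ is algebraic if for some (equivalently any) memory set $M$ the local defining map $\mu\colon A^M\to A$ is regular. *)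

(* Defs.v *)
From Stdlib Require List.
From HB Require Import structures.
From mathcomp Require Import all_boot all_order all_algebra.
Set Implicit Arguments. Unset Strict Implicit. Unset Printing Implicit Defensive.
Import GRing.Theory.
Local Open Scope ring_scope.

Record group := Group {
  gcar :> Type;
  gmul : gcar -> gcar -> gcar;
  ginv : gcar -> gcar;
  gone : gcar;
  gmulA : forall a b c, gmul a (gmul b c) = gmul (gmul a b) c;
  gmul1 : forall a, gmul gone a = a;
  gmulV : forall a, gmul (ginv a) a = gone
}.

Inductive pexpr (R : Type) (I : Type) : Type :=
| PC of R
| PX of I
| PAdd of pexpr R I & pexpr R I
| PMul of pexpr R I & pexpr R I.

Fixpoint peval (R : pzRingType) (I : Type) (e : pexpr R I) (v : I -> R) : R :=
  match e with
  | PC c => c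
  | PX i => v i
  | PAdd e1 e2 => peval e1 v + peval e2 v
  | PMul e1 e2 => peval e1 v * peval e2 v
  end.

Definition poly_fun (R : pzRingType) (I : Type) (f : (I -> R) -> R) : Prop :=
  exists e : pexpr R I, forall v, f v = peval e v.

Definition poly_map (R : pzRingType) (I J : Type) (f : (I -> R) -> (J -> R)) : Prop :=
  forall j, poly_fun (fun v => f v j).

Definition affine_algebraic_set (K : fieldType) (m : nat) (A : ('I_m -> K) -> Prop) : Prop :=
  exists S : pexpr K 'I_m -> Prop,
    forall v, A v <-> (forall e, S e -> peval e v = 0).

Definition uncountable (T : Type) : Prop := ~ exists f : nat -> T, forall t : T, exists k, f k = t.

Definition config (K : Type) (m : nat) (A : ('I_m -> K) -> Prop) (G : group)
  (x : G -> 'I_m -> K) : Prop := forall g, A (x g).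

(* tau : A^G -> A^G (given as a map on G -> K^m, only its values on A^G matter)
   is an algebraic cellular automaton: it maps A^G into A^G and there are a finite
   memory set {s i | i < n} ⊆ G and a regular local map mu : A^M -> A (restriction
   of a polynomial map K^(M x m) -> K^m) with tau(x)(g) = mu((g^{-1} x)|_M),
   where (g^{-1} x)(h) = x(g h). *)
Definition algebraic_CA (K : fieldType) (m : nat) (A : ('I_m -> K) -> Prop) (G : group)
  (tau : (G -> 'I_m -> K) -> (G -> 'I_m -> K)) : Prop :=
  (forall x, config A x -> config A (tau x)) /\
  exists (n : nat) (s : 'I_n -> G) (mu : ('I_n * 'I_m -> K) -> ('I_m -> K)),
    poly_map mu /\
    forall x, config A x -> forall g,
      tau x g = mu (fun p => x (gmul g (s p.1)) p.2).

(* Closedness of a set X ⊆ A^G in the prodiscrete topology: every configuration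
   y in A^G all of whose finite restrictions agree with some element of X lies in X
   (basic open neighbourhoods of y are the cylinders {z | z|_F = y|_F}, F finite). *)
Definition prodiscrete_closed (K : Type) (m : nat) (A : ('I_m -> K) -> Prop) (G : group)
  (X : (G -> 'I_m -> K) -> Prop) : Prop :=
  forall y, config A y ->
    (forall F : list G, exists z, X z /\ forall h, List.In h F -> z h = y h) ->
    X y.

Definition image_of (K : Type) (m : nat) (A : ('I_m -> K) -> Prop) (G : group)
  (tau : (G -> 'I_m -> K) -> (G -> 'I_m -> K)) : (G -> 'I_m -> K) -> Prop :=
  fun y => exists x, config A x /\ tau x = y.

(* Main.v *)
Require Import Defs.
From Stdlib Require Import ClassicalEpsilon FunctionalExtensionality PropExtensionality Classical.
From Stdlib Require Import Lia.
From HB Require Import structures.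
From mathcomp Require Import all_boot all_order all_algebra.
Set Implicit Arguments. Unset Strict Implicit. Unset Printing Implicit Defensive.
Import GRing.Theory.
Local Open Scope ring_scope.



Fixpoint pvars (R : Type) (I : Type) (P : I -> Prop) (e : pexpr R I) : Prop :=
  match e with
  | PC _ => True
  | PX i => P i
  | PAdd a b => pvars P a /\ pvars P b
  | PMul a b => pvars P a /\ pvars P b
  end.

Definition pf (K : fieldType) (V : Type) (P : V -> Prop) (f : (V -> K) -> K) :=
  exists e : pexpr K V, pvars P e /\ forall v, f v = peval e v.

Lemma pf_const (K : fieldType) V (P : V -> Prop) (c : K) : pf P (fun _ => c).
Proof. by exists (PC _ c). Qed.

Lemma pf_var (K : fieldType) V (P : V -> Prop) (u : V) : P u -> pf P (fun v : V -> K => v u).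
Proof. by move=> Pu; exists (PX _ u). Qed.

Lemma pf_add (K : fieldType) V (P : V -> Prop) (f g : (V -> K) -> K) :
  pf P f -> pf P g -> pf P (fun v => f v + g v).
Proof. by move=> [e1 [h1 E1]] [e2 [h2 E2]]; exists (PAdd e1 e2); split=> // v /=; rewrite E1 E2. Qed.

Lemma pf_mul (K : fieldType) V (P : V -> Prop) (f g : (V -> K) -> K) :
  pf P f -> pf P g -> pf P (fun v => f v * g v).
Proof. by move=> [e1 [h1 E1]] [e2 [h2 E2]]; exists (PMul e1 e2); split=> // v /=; rewrite E1 E2. Qed.

Lemma pf_ext (K : fieldType) V (P : V -> Prop) (f g : (V -> K) -> K) :
  (forall v, f v = g v) -> pf P f -> pf P g.
Proof. by move=> H [e [h E]]; exists e; split=> // v; rewrite -H. Qed.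

Lemma pf_sub (K : fieldType) V (P : V -> Prop) (f g : (V -> K) -> K) :
  pf P f -> pf P g -> pf P (fun v => f v - g v).
Proof.
move=> Hf Hg; apply: (@pf_ext _ _ _ (fun v => f v + (-1) * g v)).
  by move=> v; rewrite mulN1r.
by apply: pf_add => //; apply: pf_mul => //; apply: pf_const.
Qed.

Definition Id (K : fieldType) V (P : V -> Prop) (E : ((V -> K) -> K) -> Prop)
  (f : (V -> K) -> K) :=
  exists l : seq (((V -> K) -> K) * ((V -> K) -> K)),
    (forall q, List.In q l -> pf P q.1 /\ E q.2) /\
    forall v, f v = \sum_(q <- l) q.1 v * q.2 v.

Lemma Id_ext (K : fieldType) V (P : V -> Prop) E (f g : (V -> K) -> K) :
  (forall v, f v = g v) -> Id P E f -> Id P E g.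
Proof. by move=> H [l [h1 h2]]; exists l; split=> // v; rewrite -H. Qed.

Lemma Id0 (K : fieldType) V (P : V -> Prop) E : Id P E (fun _ : V -> K => 0).
Proof. by exists [::]; split=> // v; rewrite big_nil. Qed.

Lemma IdE (K : fieldType) V (P : V -> Prop) E (e : (V -> K) -> K) : E e -> Id P E e.
Proof.
move=> He; exists [:: (fun _ => 1, e)]; split.
  by move=> q [<-|//]; split=> //; apply: pf_const.
by move=> v; rewrite big_cons big_nil addr0 mul1r.
Qed.

Lemma IdD (K : fieldType) V (P : V -> Prop) E (f g : (V -> K) -> K) :
  Id P E f -> Id P E g -> Id P E (fun v => f v + g v).
Proof.
move=> [l1 [h1 e1]] [l2 [h2 e2]]; exists (l1 ++ l2); split.
  by move=> q Hq; case: (List.in_app_or _ _ _ Hq) => [/h1|/h2].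
by move=> v; rewrite big_cat /= e1 e2.
Qed.

Lemma IdM (K : fieldType) V (P : V -> Prop) E (h f : (V -> K) -> K) :
  pf P h -> Id P E f -> Id P E (fun v => h v * f v).
Proof.
move=> Hh [l [h1 e1]].
exists [seq (fun v => h v * q.1 v, q.2) | q <- l]; split.
  move=> q Hq; have [q' [<- Hq']] := proj1 (List.in_map_iff _ _ _) Hq.
  have [a b] := h1 _ Hq'.
  by split=> //; apply: pf_mul.
by move=> v; rewrite e1 big_map mulr_sumr; apply: eq_bigr => q _; rewrite mulrA.
Qed.

Lemma IdB (K : fieldType) V (P : V -> Prop) E (f g : (V -> K) -> K) :
  Id P E f -> Id P E g -> Id P E (fun v => f v - g v).
Proof.
move=> Hf Hg; apply: (@Id_ext _ _ _ _ (fun v => f v + (-1) * g v)).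
  by move=> v; rewrite mulN1r.
by apply: IdD => //; apply: IdM => //; apply: pf_const.
Qed.

Lemma Id_mono (K : fieldType) V (P : V -> Prop) (E E' : ((V -> K) -> K) -> Prop) f :
  (forall e, E e -> E' e) -> Id P E f -> Id P E' f.
Proof.
move=> H [l [h1 e1]]; exists l; split=> // q /h1 [? ?]; split=> //; exact: H.
Qed.



Definition addE (T : Type) (E : T -> Prop) (f0 : T) := fun f => E f \/ f = f0.

Lemma Id_add_split (K : fieldType) V (P : V -> Prop) E (f0 f : (V -> K) -> K) :
  Id P (addE E f0) f -> exists g, pf P g /\ Id P E (fun v => f v - g v * f0 v).
Proof.
move=> [l [h1 e1]]; elim: l f h1 e1 => [|q l IH] f h1 e1.
  exists (fun _ => 0); split; first exact: pf_const.
  apply: Id_ext (Id0 _ _) => v; by rewrite e1 big_nil mul0r subr0.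
have [g [pg Ig]] := IH (fun v => \sum_(q <- l) q.1 v * q.2 v)
   (fun q' H => h1 q' (or_intror H)) (fun v => erefl).
have [pq [Eq|Eq0]] := h1 q (or_introl erefl).
  exists g; split=> //.
  apply: Id_ext (IdD (IdM pq (IdE P Eq)) Ig) => v.
  by rewrite e1 big_cons addrA.
exists (fun v => q.1 v + g v); split; first exact: pf_add.
apply: Id_ext Ig => v; rewrite e1 big_cons mulrDl Eq0.
by rewrite [q.1 v * f0 v + _]addrC opprD addrA addrK.
Qed.

Definition spn (K : fieldType) V (L : seq ((V -> K) -> K)) (f : (V -> K) -> K) :=
  exists c : 'I_(size L) -> K, forall v,
    f v = \sum_(j < size L) c j * (nth (fun _ => 0) L j) v.

Lemma spn_ext (K : fieldType) V (L : seq ((V -> K) -> K)) f g :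
  (forall v, f v = g v) -> spn L f -> spn L g.
Proof. by move=> H [c Hc]; exists c => v; rewrite -H. Qed.

Lemma spn0 (K : fieldType) V (L : seq ((V -> K) -> K)) : spn L (fun _ => 0).
Proof. by exists (fun _ => 0) => v; rewrite big1 // => j _; rewrite mul0r. Qed.

Lemma spnD (K : fieldType) V (L : seq ((V -> K) -> K)) f g :
  spn L f -> spn L g -> spn L (fun v => f v + g v).
Proof.
move=> [c Hc] [d Hd]; exists (fun j => c j + d j) => v.
by rewrite Hc Hd -big_split; apply: eq_bigr => j _; rewrite mulrDl.
Qed.

Lemma spnZ (K : fieldType) V (L : seq ((V -> K) -> K)) (a : K) f :
  spn L f -> spn L (fun v => a * f v).
Proof.
move=> [c Hc]; exists (fun j => a * c j) => v.
by rewrite Hc mulr_sumr; apply: eq_bigr => j _; rewrite mulrA.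
Qed.

Lemma In_nth (T : Type) (x0 : T) (L : seq T) j : (j < size L)%N -> List.In (nth x0 L j) L.
Proof.
elim: L j => [//|a L IH] [|j] /= H; [by left | right; exact: IH].
Qed.

Lemma In_nth_ex (T : Type) (x0 : T) (L : seq T) x : List.In x L ->
  exists j : 'I_(size L), nth x0 L j = x.
Proof.
elim: L => [//|a L IH] /= [->|/IH [j Hj]].
  by exists ord0.
by exists (lift ord0 j).
Qed.

Lemma spn_in (K : fieldType) V (L : seq ((V -> K) -> K)) m : List.In m L -> spn L m.
Proof.
move=> /(In_nth_ex (fun _ => 0)) [j0 <-].
exists (fun j => if j == j0 then 1 else 0) => v.
rewrite (bigD1 j0) //= eqxx mul1r big1 ?addr0 // => j /negbTE ->; by rewrite mul0r.
Qed.

Lemma spn_sum (K : fieldType) V (L : seq ((V -> K) -> K)) (I : Type) (r : seq I)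
  (G : I -> (V -> K) -> K) :
  (forall i, spn L (G i)) -> spn L (fun v => \sum_(i <- r) G i v).
Proof.
move=> H; elim: r => [|i r IH].
  by apply: spn_ext (spn0 _) => v; rewrite big_nil.
by apply: spn_ext (spnD (H i) IH) => v; rewrite big_cons.
Qed.

Lemma spn_sub (K : fieldType) V (L L' : seq ((V -> K) -> K)) f :
  (forall m, List.In m L -> List.In m L') -> spn L f -> spn L' f.
Proof.
move=> HL [c Hc]; apply: (spn_ext (fun v => esym (Hc v))).
apply: spn_sum => j; apply: spnZ; apply: spn_in; apply: HL; exact: In_nth.
Qed.

Lemma spn_dep (K : fieldType) V (L : seq ((V -> K) -> K))
  (g : 'I_(size L).+1 -> (V -> K) -> K) :
  (forall i, spn L (g i)) ->
  exists c : 'I_(size L).+1 -> K, (exists i, c i != 0) /\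
     forall v, \sum_i c i * g i v = 0.
Proof.
move=> H.
pose C i := proj1_sig (constructive_indefinite_description _ (H i)).
have HC i v : g i v = \sum_(j < size L) C i j * (nth (fun _ => 0) L j) v.
  exact: (proj2_sig (constructive_indefinite_description _ (H i))).
pose M : 'M[K]_((size L).+1, size L) := \matrix_(i, j) C i j.
have kn0 : kermx M != 0.
  rewrite -mxrank_eq0 mxrank_ker subn_eq0 -ltnNge ltnS; exact: rank_leq_col.
have /rowV0Pn [u uk un0] := kn0.
have uM : u *m M = 0 by apply/sub_kermxP.
exists (fun i => u ord0 i); split.
  case: (classic (exists i, u ord0 i != 0)) => // Hn; exfalso.
  move/negP: un0; apply; apply/eqP/rowP => i; rewrite mxE; apply/eqP.
  apply/negPn/negP => Hi; apply: Hn; by exists i.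
move=> v.
under eq_bigr => i _ do rewrite HC mulr_sumr.
rewrite exchange_big /= big1 // => j _.
have E0 : \sum_i u ord0 i * C i j = 0.
  have := congr1 (fun w : 'rV_ _ => w ord0 j) uM; rewrite !mxE => HH; rewrite -[RHS]HH.
  by apply: eq_bigr => i _; rewrite mxE.
transitivity ((\sum_i u ord0 i * C i j) * nth (fun=> 0) L j v); last by rewrite E0 mul0r.
rewrite mulr_suml.
by apply: eq_bigr => i _; rewrite mulrA.
Qed.



Definition xv (K : fieldType) V (enum : nat -> option V) (j : nat) (v : V -> K) : K :=
  match enum j with Some u => v u | None => 0 end.

Fixpoint mons (K : fieldType) V (enum : nat -> option V) (N d : nat) : seq ((V -> K) -> K) :=
  match d with
  | 0 => [:: fun _ => 1]
  | d'.+1 => @mons K V enum N d' ++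
      List.flat_map (fun j => List.map (fun m => fun v => xv enum j v * m v) (@mons K V enum N d'))
        (List.seq 0 N)
  end.

Lemma mons_mono (K : fieldType) V (enum : nat -> option V) N d d' m :
  (d <= d')%N -> List.In m (@mons K V enum N d) -> List.In m (@mons K V enum N d').
Proof.
move=> /subnK <-; elim: (d' - d)%N => [//|k IH] H.
rewrite addSn /=; apply: List.in_or_app; left; exact: IH.
Qed.

Lemma mons_mul (K : fieldType) V (enum : nat -> option V) N d1 d2 m1 m2 :
  List.In m1 (@mons K V enum N d1) -> List.In m2 (@mons K V enum N d2) ->
  List.In (fun v => m1 v * m2 v) (@mons K V enum N (d1 + d2)).
Proof.
elim: d1 m1 => [|d1 IH] m1 /=.
  move=> [<-|//] H2; rewrite add0n.
  have -> : (fun v => 1 * m2 v) = m2 by apply: functional_extensionality => v; rewrite mul1r.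
  done.
move=> H1 H2; rewrite ?addSn /=; apply: List.in_or_app.
case: (List.in_app_or _ _ _ H1) => [H1'|H1'].
  left; exact: IH.
right; have [j [Hj Hm]] := proj1 (List.in_flat_map _ _ _) H1'.
have [m [<- Hm']] := proj1 (List.in_map_iff _ _ _) Hm.
apply/List.in_flat_map; exists j; split=> //.
apply/List.in_map_iff; exists (fun v => m v * m2 v); split; last exact: IH.
by apply: functional_extensionality => v; rewrite mulrA.
Qed.

Lemma spn_mul (K : fieldType) V (enum : nat -> option V) N d1 d2 f g :
  spn (@mons K V enum N d1) f -> spn (@mons K V enum N d2) g ->
  spn (@mons K V enum N (d1 + d2)) (fun v => f v * g v).
Proof.
move=> [c Hc] [c' Hc'].
apply: (@spn_ext _ _ _ (fun v => \sum_(j < size (mons K enum N d1)) \sum_(k < size (mons K enum N d2))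
   (c j * c' k) * (nth (fun=> 0) (mons K enum N d1) j v * nth (fun=> 0) (mons K enum N d2) k v))).
  move=> v; rewrite Hc Hc' mulr_suml; apply: eq_bigr => j _; rewrite mulr_sumr.
  by apply: eq_bigr => k _; rewrite mulrACA.
apply: spn_sum => j; apply: spn_sum => k.
apply: spnZ; apply: spn_in; apply: mons_mul; exact: In_nth.
Qed.

Definition Penum V (enum : nat -> option V) (u : V) := exists k, enum k = Some u.

Definition idx V (enum : nat -> option V) (u : V) : nat :=
  epsilon (inhabits 0%N) (fun k => enum k = Some u).

Lemma idxP V (enum : nat -> option V) u : Penum enum u -> enum (idx enum u) = Some u.
Proof. move=> H; exact: (epsilon_spec (inhabits 0%N) (fun k => enum k = Some u) H). Qed.

Fixpoint vb (R : Type) V (enum : nat -> option V) (e : pexpr R V) : nat :=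
  match e with
  | PC _ => 0
  | PX u => (idx enum u).+1
  | PAdd a b => maxn (vb enum a) (vb enum b)
  | PMul a b => maxn (vb enum a) (vb enum b)
  end.

Fixpoint deg (R : Type) V (e : pexpr R V) : nat :=
  match e with
  | PC _ => 0
  | PX u => 1
  | PAdd a b => maxn (deg a) (deg b)
  | PMul a b => (deg a + deg b)%N
  end.

Lemma spn_mono (K : fieldType) V (enum : nat -> option V) N d d' f :
  (d <= d')%N -> spn (@mons K V enum N d) f -> spn (@mons K V enum N d') f.
Proof. move=> H; apply: spn_sub => m; exact: mons_mono. Qed.

Lemma spn_pexpr (K : fieldType) V (enum : nat -> option V) (e : pexpr K V) N d :
  pvars (Penum enum) e -> (vb enum e <= N)%N -> (deg e <= d)%N ->
  spn (@mons K V enum N d) (peval e).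
Proof.
elim: e d => [c|u|a IHa b IHb|a IHa b IHb] d /=.
- move=> _ _ _; apply: (spn_mono (leq0n d)).
  apply: (@spn_ext _ _ _ (fun v => c * 1)); first by move=> v; rewrite mulr1.
  by apply: spnZ; apply: spn_in; left.
- move=> Pu HN Hd; apply: (spn_mono Hd).
  apply: (@spn_ext _ _ _ (fun v => xv enum (idx enum u) v * 1)).
    by move=> v; rewrite mulr1 /xv idxP.
  apply: spn_in => /=; right.
  apply/List.in_flat_map; exists (idx enum u); split.
    apply/List.in_seq; split; first lia.
    by move/leP: HN; lia.
  by left.
- move=> [Pa Pb]; rewrite !geq_max => /andP [Na Nb] /andP [Da Db].
  exact: spnD (IHa _ Pa Na Da) (IHb _ Pb Nb Db).
- move=> [Pa Pb]; rewrite !geq_max => /andP [Na Nb] Dab.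
  apply: (spn_mono Dab); apply: spn_mul; [exact: IHa | exact: IHb].
Qed.



Lemma fiber_big (K : fieldType) (hK : uncountable K) (f : K -> nat) (B : nat -> nat) :
  exists n (s : seq K), uniq s /\ size s = (B n).+1 /\ (forall a, a \in s -> f a = n).
Proof.
apply: NNPP => Hn.
have cover n : exists s : seq K, forall a, f a = n -> a \in s.
  apply: NNPP => H.
  have H' (s : seq K) : exists a, f a = n /\ a \notin s.
    apply: NNPP => H2; apply: H; exists s => a fa; apply: NNPP => Ha.
    by apply: H2; exists a; split=> //; apply/negP.
  have build k : exists s : seq K, uniq s /\ size s = k /\ (forall a, a \in s -> f a = n).
    elim: k => [|k [s [us [ss fs]]]]; first by exists [::].
    have [a [fa ans]] := H' s; exists (a :: s); split; first by rewrite /= ans.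
    split; first by rewrite /= ss.
    by move=> b; rewrite inE => /orP [/eqP -> //|]; apply: fs.
  have [s [us [ss fs]]] := build (B n).+1.
  by apply: Hn; exists n, s.
pose L n := epsilon (inhabits [::]) (fun s : seq K => forall a, f a = n -> a \in s).
have HL n a : f a = n -> a \in L n.
  exact: (epsilon_spec (inhabits [::]) (fun s : seq K => forall a, f a = n -> a \in s) (cover n)).
apply: hK.
exists (fun k => match (unpickle k : option (nat * nat)) with
                 | Some (n, i) => nth 0 (L n) i | None => 0 end).
move=> t; exists (pickle (f t, index t (L (f t)))); rewrite pickleK.
by rewrite nth_index //; apply: HL.
Qed.



Lemma pf_prod (K : fieldType) V (P : V -> Prop) (I : Type) (r : seq I) (Pd : pred I)
  (F : I -> (V -> K) -> K) :
  (forall i, pf P (F i)) -> pf P (fun v => \prod_(i <- r | Pd i) F i v).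
Proof.
move=> H; elim: r => [|i r IH].
  by apply: (pf_ext (fun v => esym (big_nil _ _ _ _))); apply: pf_const.
apply: (@pf_ext _ _ _ (fun v => if Pd i then F i v * \prod_(j <- r | Pd j) F j v
                                 else \prod_(j <- r | Pd j) F j v)).
  by move=> v; rewrite big_cons.
by case: (Pd i) => //; apply: pf_mul.
Qed.

Lemma Id_sum (K : fieldType) V (P : V -> Prop) E (I : Type) (r : seq I)
  (F : I -> (V -> K) -> K) :
  (forall i, Id P E (F i)) -> Id P E (fun v => \sum_(i <- r) F i v).
Proof.
move=> H; elim: r => [|i r IH].
  by apply: (Id_ext (fun v => esym (big_nil _ _ _ _))); apply: Id0.
by apply: (Id_ext (fun v => esym (big_cons _ _ _ _ _ _))); apply: IdD.
Qed.

Lemma step_lemma (K : closedFieldType) (hK : uncountable K) V (enum : nat -> option V)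
  (E : ((V -> K) -> K) -> Prop) (u : V) :
  Penum enum u -> ~ Id (Penum enum) E (fun _ => 1) ->
  exists a : K, ~ Id (Penum enum) (addE E (fun v => v u - a)) (fun _ => 1).
Proof.
move=> Pu proper; apply: NNPP => Hn.
have H a : Id (Penum enum) (addE E (fun v => v u - a)) (fun _ => 1).
  by apply: NNPP => H; apply: Hn; exists a.
pose Q a (g : (V -> K) -> K) := pf (Penum enum) g /\
   Id (Penum enum) E (fun v => 1 - g v * (v u - a)).
pose G a := epsilon (inhabits (fun _ : V -> K => (0 : K))) (Q a).
have GP a : Q a (G a).
  exact: (epsilon_spec (inhabits (fun _ : V -> K => (0 : K))) (Q a) (Id_add_split (H a))).
have pfxu (a : K) : pf (Penum enum) (fun v : V -> K => v u - a).
  by apply: pf_sub; [apply: pf_var | apply: pf_const].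
pose R a (e : pexpr K V) := pvars (Penum enum) e /\ forall v, G a v = peval e v.
pose ex a := epsilon (inhabits (PC V (0 : K))) (R a).
have exP a : R a (ex a).
  exact: (epsilon_spec (inhabits (PC V (0 : K))) (R a) (proj1 (GP a))).
pose code a := maxn (vb enum (ex a)) (deg (ex a)).
have [n [s [us [ss cs]]]] := fiber_big hK code (fun n => size (@mons K V enum n n)).
set L := @mons K V enum n n in ss.
pose a (i : 'I_(size L).+1) := nth 0 s i.
have a_inj i j : a i = a j -> i = j.
  move=> Hij; apply: val_inj => /=; apply/eqP.
  by rewrite -(nth_uniq 0 _ _ us) ?ss ?ltn_ord //; apply/eqP.
pose g i := G (a i).
have gspn i : spn L (g i).
  have ins : a i \in s by apply: mem_nth; rewrite ss ltn_ord.
  have := cs _ ins; rewrite /code => Hc.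
  have [Pe Ee] := exP (a i).
  apply: (spn_ext (fun v => esym (Ee v))); apply: spn_pexpr => //.
    by rewrite -Hc leq_maxl.
  by rewrite -Hc leq_maxr.
have [c [[i0 ci0] cg]] := spn_dep gspn.
pose q : {poly K} := \sum_i c i *: \prod_(j | j != i) ('X - (a j)%:P).
have qv x : q.[x] = \sum_i c i * \prod_(j | j != i) (x - a j).
  rewrite horner_sum; apply: eq_bigr => i _.
  by rewrite hornerZ horner_prod; congr (_ * _); apply: eq_bigr => j _; rewrite hornerXsubC.
have qn0 : q != 0.
  apply/negP => /eqP q0; have := congr1 (fun p => p.[a i0]) q0; rewrite /= horner0 qv.
  rewrite [\sum_i _](bigD1 i0) //= [\sum_(i | i != i0) _]big1 ?addr0.
    move/eqP; rewrite mulf_eq0 (negbTE ci0) /=; apply/negP/prodf_neq0 => j ji0.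
    by rewrite subr_eq0; apply/eqP => /a_inj Hj; move: ji0; rewrite Hj eqxx.
  move=> i ii0; rewrite (bigD1 i0) /=; last by rewrite eq_sym.
  by rewrite subrr mul0r mulr0.
have Iq : Id (Penum enum) E (fun v => q.[v u]).
  pose Pr v := \prod_j (v u - a j).
  pose T i v := \prod_(j | j != i) (v u - a j).
  have IT i : Id (Penum enum) E (fun v => T i v - g i v * Pr v).
    apply: (@Id_ext _ _ _ _ (fun v => T i v * (1 - g i v * (v u - a i)))).
      move=> v; rewrite /Pr (bigD1 i) //= mulrBr mulr1; congr (_ - _).
      by rewrite mulrC -mulrA.
    apply: IdM; last exact: (proj2 (GP (a i))).
    by apply: pf_prod => j; apply: pfxu.
  apply: (@Id_ext _ _ _ _ (fun v => \sum_(i <- index_enum _) c i * (T i v - g i v * Pr v))).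
    move=> v; rewrite qv.
    under eq_bigr => i _ do rewrite mulrBr.
    rewrite sumrB.
    have -> : \sum_i c i * (g i v * Pr v) = 0.
      transitivity ((\sum_i c i * g i v) * Pr v); last by rewrite cg mul0r.
      by rewrite mulr_suml; apply: eq_bigr => i _; rewrite mulrA.
    by rewrite subr0.
  by apply: Id_sum => i; apply: IdM => //; apply: pf_const.
have [rs Hq] := closed_field_poly_normal q.
have lcn0 : lead_coef q != 0 by rewrite lead_coef_eq0.
have claim : Id (Penum enum) E
   (fun v => 1 - (\prod_(r <- rs) G r v) * \prod_(r <- rs) (v u - r)).
  elim: rs {Hq} => [|r rs IH].
    by apply: (Id_ext _ (Id0 _ _)) => v; rewrite !big_nil mul1r subrr.
  apply: (@Id_ext _ _ _ _ (fun v => (1 - G r v * (v u - r)) +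
      (G r v * (v u - r)) * (1 - (\prod_(r <- rs) G r v) * \prod_(r <- rs) (v u - r)))).
    move=> v; rewrite !big_cons [X in _ + X]mulrBr mulr1 addrA subrK.
    by rewrite mulrACA.
  apply: IdD; first exact: (proj2 (GP r)).
  by apply: IdM => //; apply: pf_mul; [exact: (proj1 (GP r)) | apply: pfxu].
have IXs : Id (Penum enum) E (fun v => \prod_(r <- rs) (v u - r)).
  apply: (@Id_ext _ _ _ _ (fun v => (lead_coef q)^-1 * q.[v u])).
    move=> v; rewrite {2}Hq hornerZ horner_prod mulKf //.
    by apply: eq_bigr => r _; rewrite hornerXsubC.
  by apply: IdM => //; apply: pf_const.
apply: proper.
apply: (@Id_ext _ _ _ _ (fun v => (1 - (\prod_(r <- rs) G r v) * \prod_(r <- rs) (v u - r))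
   + (\prod_(r <- rs) G r v) * \prod_(r <- rs) (v u - r))).
  by move=> v; rewrite subrK.
apply: IdD => //; apply: IdM => //.
by apply: pf_prod => r; exact: (proj1 (GP r)).
Qed.



Definition stepv (K : fieldType) V (P : V -> Prop) (E : ((V -> K) -> K) -> Prop) (u : V) : K :=
  epsilon (inhabits 0) (fun a => ~ Id P (addE E (fun v => v u - a)) (fun _ => 1)).

Fixpoint Es (K : fieldType) V (enum : nat -> option V) (E : ((V -> K) -> K) -> Prop) (k : nat)
  : ((V -> K) -> K) -> Prop :=
  match k with
  | 0 => E
  | k'.+1 => match enum k' with
             | Some u => addE (Es enum E k') (fun v => v u - stepv (Penum enum) (Es enum E k') u)
             | None => Es enum E k'
             end
  end.

Lemma Es_mono (K : fieldType) V (enum : nat -> option V) E k k' f :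
  (k <= k')%N -> @Es K V enum E k f -> Es enum E k' f.
Proof.
move=> /subnK <-; elim: (k' - k)%N => [//|j IH] H.
rewrite addSn /=; case: (enum (j + k)%N) => [u|]; last exact: IH.
left; exact: IH.
Qed.

Lemma nullst (K : closedFieldType) (hK : uncountable K) V (enum : nat -> option V)
  (E : ((V -> K) -> K) -> Prop) :
  (forall f, E f -> exists e, pvars (Penum enum) e /\ forall v, f v = peval e v) ->
  (forall l : seq ((V -> K) -> K), (forall f, List.In f l -> E f) ->
      exists v, forall f, List.In f l -> f v = 0) ->
  exists v, forall f, E f -> f v = 0.
Proof.
move=> Epf fin.
have proper0 : ~ Id (Penum enum) E (fun _ => 1).
  move=> [l [h1 e1]].
  have [v Hv] := fin (List.map snd l) (fun f Hf =>
     let: ex_intro q (conj E1 E2) := proj1 (List.in_map_iff _ _ _) Hf in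
     eq_ind _ (fun x => E x) (proj2 (h1 q E2)) _ E1).
  have Z : forall l' : seq (((V -> K) -> K) * ((V -> K) -> K)),
      (forall q, List.In q l' -> List.In q l) -> \sum_(q <- l') q.1 v * q.2 v = 0.
    elim=> [|q l' IH] Hl; first by rewrite big_nil.
    rewrite big_cons IH ?addr0; last by move=> q' Hq'; apply: Hl; right.
    rewrite (Hv q.2) ?mulr0 //; apply: (List.in_map snd); by apply: Hl; left.
  by have := e1 v; rewrite Z // => /eqP; rewrite oner_eq0.
pose P := Penum enum.
have proper k : ~ Id P (Es enum E k) (fun _ => 1).
  elim: k => [//|k IH] /=.
  case Ek: (enum k) => [u|//].
  have Pu : P u by exists k.
  exact: (epsilon_spec (inhabits 0)
     (fun a => ~ Id P (addE (Es enum E k) (fun v => v u - a)) (fun _ => 1))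
     (step_lemma hK Pu IH)).
pose sol u := stepv P (Es enum E (idx enum u)) u.
have solE u : P u -> Es enum E (idx enum u).+1 (fun v => v u - sol u).
  by move=> Pu /=; rewrite idxP //; right.
have ev e : pvars P e -> Id P (Es enum E (vb enum e)) (fun v => peval e v - peval e sol).
  elim: e => [c|u|a IHa b IHb|a IHa b IHb] /=.
  - by move=> _; apply: (Id_ext _ (Id0 _ _)) => v; rewrite subrr.
  - by move=> Pu; apply: IdE; apply: solE.
  - move=> [Pa Pb]; apply: (@Id_ext _ _ _ _ (fun v => (peval a v - peval a sol) +
        (peval b v - peval b sol))).
      by move=> v; rewrite opprD addrACA.
    apply: IdD.
      by apply: Id_mono (IHa Pa) => f; apply: Es_mono; apply: leq_maxl.
    by apply: Id_mono (IHb Pb) => f; apply: Es_mono; apply: leq_maxr.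
  - move=> [Pa Pb]; apply: (@Id_ext _ _ _ _ (fun v => peval b v * (peval a v - peval a sol) +
        peval a sol * (peval b v - peval b sol))).
      by move=> v; rewrite !mulrBr addrA [peval b v * peval a sol]mulrC subrK mulrC.
    apply: IdD; apply: IdM.
    + by exists b.
    + by apply: Id_mono (IHa Pa) => f; apply: Es_mono; apply: leq_maxl.
    + exact: pf_const.
    + by apply: Id_mono (IHb Pb) => f; apply: Es_mono; apply: leq_maxr.
exists sol => f Ef.
have [e [Pe Fe]] := Epf f Ef.
have Ic : Id P (Es enum E (vb enum e)) (fun _ => f sol).
  apply: (@Id_ext _ _ _ _ (fun v => f v - (peval e v - peval e sol))).
    by move=> v; rewrite Fe opprB addrC subrK Fe.
  apply: IdB (ev e Pe); apply: IdE; apply: (@Es_mono _ _ _ _ 0) => //.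
case: (eqVneq (f sol) 0) => // fn0; exfalso.
apply: (proper (vb enum e)).
apply: (@Id_ext _ _ _ _ (fun v => (f sol)^-1 * f sol)); first by move=> v; rewrite mulVf.
by apply: IdM => //; apply: pf_const.
Qed.



Lemma gmulV' (G : group) (a : G) : gmul a (ginv a) = gone G.
Proof.
have e1 : gmul a (ginv a) = gmul (gmul (ginv (ginv a)) (ginv a)) (gmul a (ginv a)).
  by rewrite gmulV gmul1.
rewrite e1 -gmulA [gmul (ginv a) (gmul a _)]gmulA gmulV gmul1 gmulV //.
Qed.

Lemma gmul1' (G : group) (a : G) : gmul a (gone G) = a.
Proof. by rewrite -(gmulV a) gmulA gmulV' gmul1. Qed.

Fixpoint weval (G : group) n (s : 'I_n -> G) (w : seq ('I_n * bool)) : G :=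
  match w with
  | [::] => gone G
  | (p, b) :: w' => gmul (if b then s p else ginv (s p)) (weval s w')
  end.

Lemma weval_cat (G : group) n (s : 'I_n -> G) w w' :
  weval s (w ++ w') = gmul (weval s w) (weval s w').
Proof.
elim: w => [|[p b] w IH] /=; first by rewrite gmul1.
by rewrite IH gmulA.
Qed.

Definition winv n (w : seq ('I_n * bool)) := rev [seq (pb.1, ~~ pb.2) | pb <- w].

Lemma weval_inv (G : group) n (s : 'I_n -> G) w :
  gmul (weval s w) (weval s (winv w)) = gone G.
Proof.
elim: w => [|[p b] w IH] /=; first by rewrite gmul1.
rewrite /winv /= rev_cons -cats1 weval_cat -/(winv w) /= gmul1'.
rewrite -gmulA [gmul (weval s w) _]gmulA IH gmul1.
by case: b => /=; [apply: gmulV' | apply: gmulV].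
Qed.

Definition Rel (G : group) n (s : 'I_n -> G) (a b : G) := exists w, b = gmul a (weval s w).

Lemma Rel_refl (G : group) n (s : 'I_n -> G) a : Rel s a a.
Proof. by exists [::]; rewrite /= gmul1'. Qed.

Lemma Rel_trans (G : group) n (s : 'I_n -> G) a b c : Rel s a b -> Rel s b c -> Rel s a c.
Proof.
move=> [w1 ->] [w2 ->]; exists (w1 ++ w2); by rewrite weval_cat gmulA.
Qed.

Lemma Rel_sym (G : group) n (s : 'I_n -> G) a b : Rel s a b -> Rel s b a.
Proof.
move=> [w ->]; exists (winv w); by rewrite -gmulA weval_inv gmul1'.
Qed.

Lemma Rel_step (G : group) n (s : 'I_n -> G) a p : Rel s a (gmul a (s p)).
Proof. by exists [:: (p, true)]; rewrite /= gmul1'. Qed.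

Definition rep (G : group) n (s : 'I_n -> G) (h : G) : G :=
  epsilon (inhabits (gone G)) (fun r => Rel s r h).

Lemma repP (G : group) n (s : 'I_n -> G) h : Rel s (rep s h) h.
Proof.
exact: (epsilon_spec (inhabits (gone G)) (fun r => Rel s r h) (ex_intro (fun r => Rel s r h) h (Rel_refl s h))).
Qed.

Lemma rep_eq (G : group) n (s : 'I_n -> G) h h' : Rel s h h' -> rep s h = rep s h'.
Proof.
move=> H; rewrite /rep; congr (epsilon _ _).
apply: functional_extensionality => r; apply: propositional_extensionality; split=> Hr.
  exact: Rel_trans Hr H.
exact: Rel_trans Hr (Rel_sym H).
Qed.

Fixpoint psub (R I J : Type) (g : I -> J) (e : pexpr R I) : pexpr R J :=
  match e with
  | PC c => PC J c
  | PX i => PX R (g i)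
  | PAdd a b => PAdd (psub g a) (psub g b)
  | PMul a b => PMul (psub g a) (psub g b)
  end.

Lemma peval_psub (R : pzRingType) I J (g : I -> J) (e : pexpr R I) v :
  peval (psub g e) v = peval e (fun i => v (g i)).
Proof. by elim: e => //= a -> b ->. Qed.

Lemma pvars_psub (R : Type) I J (P : J -> Prop) (g : I -> J) (e : pexpr R I) :
  (forall i, P (g i)) -> pvars P (psub g e).
Proof. by move=> H; elim: e => //= a Ha b Hb. Qed.



Theorem theorem1p1 (G : group) (K : closedFieldType) (m : nat)
  (A : ('I_m -> K) -> Prop)
  (hK : uncountable K) (hA : affine_algebraic_set A)
  (tau : (G -> 'I_m -> K) -> (G -> 'I_m -> K))
  (htau : algebraic_CA A tau) :
  prodiscrete_closed A (image_of A tau).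
Proof.
have [S HS] := hA.
have [tau_conf [n [s [mu [pmu Htau]]]]] := htau.
move=> y yconf hy.
pose V := (G * 'I_m)%type.
pose enum (r : G) (k : nat) : option V :=
  match (unpickle k : option (seq ('I_n * bool) * 'I_m)) with
  | Some (w, i) => Some (gmul r (weval s w), i)
  | None => None
  end.
have Penum_R r h i : Rel s r h -> Penum (enum r) (h, i).
  move=> [w ->]; exists (pickle (w, i)); by rewrite /enum pickleK.
pose Er (r : G) (f : (V -> K) -> K) :=
  (exists h e, Rel s r h /\ S e /\ f = fun v => peval e (fun i => v (h, i))) \/
  (exists h i, Rel s r h /\ f = fun v => mu (fun p => v (gmul h (s p.1), p.2)) i - y h i).
have Esol r : exists v, forall f, Er r f -> f v = 0.
  apply: (nullst hK (enum := enum r)).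
    move=> f [[h [e [Rh [Se ->]]]]|[h [i [Rh ->]]]].
      exists (psub (fun i => (h, i)) e); split.
        by apply: pvars_psub => i; apply: Penum_R.
      by move=> v; rewrite peval_psub.
    have [e He] := pmu i.
    exists (PAdd (psub (fun p : 'I_n * 'I_m => (gmul h (s p.1), p.2)) e) (PC _ (- y h i))).
    split.
      split=> //; apply: pvars_psub => p; apply: Penum_R.
      exact: Rel_trans Rh (Rel_step s h p.1).
    by move=> v /=; rewrite peval_psub -He.
  move=> l Hl.
  have [F HF] : exists F : list G, forall f, List.In f l ->
     (exists h e, Rel s r h /\ S e /\ f = fun v => peval e (fun i => v (h, i))) \/
     (exists h i, List.In h F /\ f = fun v => mu (fun p => v (gmul h (s p.1), p.2)) i - y h i).
    elim: l Hl => [|f l IH] Hl; first by exists nil.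
    have [F HF] := IH (fun f' H => Hl f' (or_intror H)).
    case: (Hl f (or_introl erefl)) => [HA|[h [i [Rh Ef]]]].
      exists F => f' [<-|Hf']; [by left | exact: HF].
    exists (h :: F) => f' [<-|Hf'].
      by right; exists h, i; split=> //; left.
    case: (HF f' Hf') => [?|[h' [i' [Hh' ->]]]]; first by left.
    by right; exists h', i'; split=> //; right.
  have [z [[x0 [x0c <-]] Hz]] := hy F.
  exists (fun p => x0 p.1 p.2) => f Hf.
  case: (HF f Hf) => [[h [e [_ [Se ->]]]]|[h [i [Fh ->]]]].
    by apply: (proj1 (HS _) (x0c h)).
  by rewrite -(Hz h Fh) (Htau _ x0c) subrr.
pose sol r := epsilon (inhabits (fun _ : V => (0 : K))) (fun v => forall f, Er r f -> f v = 0).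
have solP r f : Er r f -> f (sol r) = 0.
  exact: (epsilon_spec (inhabits (fun _ : V => (0 : K))) (fun v => forall f, Er r f -> f v = 0) (Esol r) f).
pose x (h : G) (i : 'I_m) := sol (rep s h) (h, i).
have xconf : config A x.
  move=> g; apply/HS => e Se.
  have := solP (rep s g) (fun v => peval e (fun i => v (g, i))).
  apply; left; exists g, e; split=> //; exact: repP.
exists x; split=> //.
apply: functional_extensionality => g; apply: functional_extensionality => i.
rewrite (Htau _ xconf).
have -> : (fun p : 'I_n * 'I_m => x (gmul g (s p.1)) p.2) =
          (fun p => sol (rep s g) (gmul g (s p.1), p.2)).
  apply: functional_extensionality => p; rewrite /x.
  by rewrite (rep_eq (Rel_sym (Rel_step s g p.1))).
apply/eqP; rewrite -subr_eq0; apply/eqP.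
have := solP (rep s g) (fun v => mu (fun p => v (gmul g (s p.1), p.2)) i - y g i).
apply; right; exists g, i; split=> //; exact: repP.
Qed.
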